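(* Let $H=(V,E)$ be a $3$-uniform hypergraph with at least one edge, without pendant vertices (vertices of degree $1$), whose $2$-intersection graph $\mathcal L_2(H)$ is connected. Then $H$ is eulerian.
   Context: A hypergraph $H=(V,E)$ consists of a finite nonempty vertex set $V$, a finite edge set $E$ disjoint from $V$, and an incidence function assigning to each edge $e\in E$ a subset of $V$ (also denoted $e$); distinct edges may have the same vertex set. $H$ is $3$-uniform if $|e|=3$ for all $e\in E$. The degree of a vertex is the number of edges containing it. A walk is a sequence $W=v_0e_1v_1e_2\cdots e_kv_k$ with $v_i\in V$, $e_i\in E$, such that for each $i$, $v_{i-1}\ne v_i$ and $v_{i-1},v_i\in e_i$. $W$ is closed if $k\ge 2$ and $v_0=v_k$; it is a strict trail if $e_1,\dots,e_k$ are pairwise distinct. An Euler tour of $H$ is a closed strict trail traversing every edge of $H$; $H$ is eulerian if it has one. The $2$-intersection graph $\mathcal L_2(H)$ is the simple graph with vertex set $E$ in which distinct $e,e'$ are adjacent iff $|e\cap e'|=2$. *)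

(* Defs.v *)
From mathcomp Require Import all_boot.
Set Implicit Arguments. Unset Strict Implicit. Unset Printing Implicit Defensive.

(* A hypergraph H = (V, E) is given by finite types V (vertices), E (edges)
   and an incidence function inc : E -> {set V}; distinct edges may share
   the same vertex set. *)

Section Hyper.
Variables (V E : finType) (inc : E -> {set V}).

Definition three_uniform : Prop := forall e : E, #|inc e| = 3.

Definition hdeg (v : V) : nat := #|[set e : E | v \in inc e]|.

Definition no_pendant : Prop := forall v : V, hdeg v <> 1.

Definition L2adj : rel E :=
  fun e e' => (e != e') && (#|inc e :&: inc e'| == 2).

Definition L2_connected : Prop := forall e e' : E, connect L2adj e e'.

(* A walk v0 e1 v1 ... ek vk is represented by v0 together with the
   sequence [:: (e1, v1); ...; (ek, vk)]. *)
Fixpoint is_walk (v : V) (s : seq (E * V)) : bool :=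
  match s with
  | [::] => true
  | (e, w) :: s' => [&& v != w, v \in inc e, w \in inc e & is_walk w s']
  end.

Definition closed_walk (v0 : V) (s : seq (E * V)) : bool :=
  [&& is_walk v0 s, 2 <= size s & last v0 (map snd s) == v0].

Definition strict_trail (v0 : V) (s : seq (E * V)) : bool :=
  is_walk v0 s && uniq (map fst s).

Definition euler_tour (v0 : V) (s : seq (E * V)) : bool :=
  [&& closed_walk v0 s, strict_trail v0 s &
      all (fun e => e \in map fst s) (enum E)].

Definition eulerian : Prop := exists (v0 : V) (s : seq (E * V)), euler_tour v0 s.

End Hyper.

(* Main.v *)
Require Import Defs.
From mathcomp Require Import all_boot zify.
Set Implicit Arguments. Unset Strict Implicit. Unset Printing Implicit Defensive.

Lemma card2_other (T : finType) (A : {set T}) x :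
  #|A| = 2 -> x \in A -> exists y, (y \in A) && (y != x).
Proof.
move=> cA xA; have : #|A :\ x| = 1 by move: cA; rewrite (cardsD1 x) xA => -[].
move=> c1; have : 0 < #|A :\ x| by rewrite c1.
move=> /card_gt0P [y]; rewrite !inE => /andP[yx yA].
by exists y; rewrite yA yx.
Qed.

Lemma card2_eq (T : finType) (A : {set T}) a b :
  #|A| = 2 -> a \in A -> b \in A -> a != b -> A = [set a; b].
Proof.
move=> cA aA bA ab; apply/esym/eqP; rewrite eqEcard cA cards2 ab leqnn andbT.
by apply/subsetP=> x; rewrite !inE => /orP[] /eqP->.
Qed.

Lemma card2_cases (T : finType) (A : {set T}) a b x :
  #|A| = 2 -> a \in A -> b \in A -> a != b -> x \in A -> (x = a) \/ (x = b).
Proof.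
move=> cA aA bA ab; rewrite (card2_eq cA aA bA ab) !inE.
by case/orP=> /eqP->; [left|right].
Qed.

Lemma inter_nonempty (T : finType) (A B C : {set T}) :
  A \subset C -> B \subset C -> #|C| < #|A| + #|B| -> exists x, (x \in A) && (x \in B).
Proof.
move=> AC BC lt; case: (set_0Vmem (A :&: B)) => [AB0|[x]]; last first.
  by rewrite inE => xAB; exists x.
move: lt; rewrite -cardsUI AB0 cards0 addn0 ltnNge.
by rewrite subset_leq_card // subUset AC BC.
Qed.

Lemma cnt (T : finType) (P : pred T) : #|[set x | P x]| = \sum_x (P x : nat).
Proof.
rewrite (eq_bigr (fun x => if P x then 1 else 0)); last by move=> x _; case: (P x).
rewrite -big_mkcond sum1_card; apply: eq_card => x; by rewrite inE.
Qed.

Lemma odd_sum_card (T : finType) (f : T -> nat) :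
  odd (\sum_x f x) = odd #|[set x | odd (f x)]|.
Proof.
rewrite cnt.
have gen r : odd (\sum_(x <- r) f x) = odd (\sum_(x <- r) (odd (f x) : nat)).
  elim: r => [|x r IH]; rewrite ?big_nil // !big_cons !oddD IH.
  by case: (odd (f x)).
exact: gen.
Qed.

Lemma double_count (V E : finType) (inc : E -> {set V}) :
  \sum_v #|[set e | v \in inc e]| = \sum_e #|inc e|.
Proof.
rewrite (eq_bigr (fun v => \sum_e (v \in inc e : nat))); last by move=> v _; rewrite cnt.
rewrite exchange_big /=; apply: eq_bigr => e _.
rewrite -(cnt (mem (inc e))); apply: eq_card => x; by rewrite inE.
Qed.

Section Par.
Variables (V E : finType) (inc : E -> {set V}).
Hypothesis H3 : three_uniform inc.

Definition Vof (F : {set E}) : {set V} := \bigcup_(e in F) inc e.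

Definition Qst (F : {set E}) :=
  forall S : {set V}, S \subset Vof F -> #|S| <= #|F| -> ~~ odd (#|S| + #|F|) ->
  exists o : E -> V, (forall e, e \in F -> o e \in inc e) /\
    (forall v, odd #|[set e in F | o e == v]| = (v \in S)).

Definition Good F := [/\ F != set0, Qst F & #|Vof F| <= #|F| + 2].

Lemma Vof1 e : Vof [set e] = inc e.
Proof. by rewrite /Vof big_set1. Qed.

Lemma VofU e (F : {set E}) : Vof (e |: F) = inc e :|: Vof F.
Proof. by rewrite /Vof bigcup_setU big_set1. Qed.

Lemma sub_Vof e (F : {set E}) : e \in F -> inc e \subset Vof F.
Proof. by move=> eF; apply: (bigcup_sup e eF). Qed.

Lemma Good1 e : Good [set e].
Proof.
split.
- by apply/set0Pn; exists e; rewrite inE.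
- move=> S; rewrite Vof1 cards1 => SV S1 par.
  have cS : #|S| = 1.
    by move: S1 par; case: #|S| => [|[|]] //.
  have [s Ss] : exists s, S = [set s] by apply/cards1P/eqP.
  have sin : s \in inc e by move/subsetP: SV; apply; rewrite Ss inE.
  exists (fun _ => s); split=> [x|v]; first by rewrite inE => /eqP->.
  rewrite Ss inE; case: (eqVneq v s) => [_|_].
  + rewrite (_ : [set x in [set e] | true] = [set e]) ?cards1 //.
    by apply/setP=> x; rewrite !inE andbT.
  + rewrite (_ : [set x in [set e] | false] = set0) ?cards0 //.
    by apply/setP=> x; rewrite !inE andbF.
- by rewrite Vof1 H3 cards1.
Qed.


Lemma card_flip (S : {set V}) w :
  let S' := [set v | (v \in S) != (v == w)] in
  (w \in S -> #|S'|.+1 = #|S|) /\ (w \notin S -> #|S'| = #|S|.+1).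
Proof.
move=> S'; split=> wS.
- rewrite (cardsD1 w S) wS add1n; congr _.+1; apply: eq_card => v.
  by rewrite !inE; case: (eqVneq v w) => [->|]; rewrite ?wS //; case: (v \in S).
- have := cardsU1 w S; rewrite wS add1n => <-.
  apply: eq_card => v; rewrite !inE.
  by case: (eqVneq v w) => [->|]; rewrite ?(negbTE wS) //; case: (v \in S).
Qed.

Lemma Grow (F : {set E}) e f :
  Good F -> e \notin F -> f \in F -> #|inc e :&: inc f| = 2 -> Good (e |: F).
Proof.
case=> F0 QF VF eF fF cef.
have cF' : #|e |: F| = #|F|.+1 by rewrite cardsU1 eF.
have sub_f : inc f \subset Vof F := sub_Vof fF.
have priv : #|inc e :\: Vof F| <= 1.
  have h2 : 2 <= #|inc e :&: Vof F|.
    by rewrite -cef; apply: subset_leq_card; apply: setIS sub_f.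
  move: (cardsID (Vof F) (inc e)); rewrite H3; lia.
have privU x y : x \in inc e :\: Vof F -> y \in inc e :\: Vof F -> x = y.
  by move/card_le1_eqP: priv => h xi yi; apply: h.
have VF' : #|Vof (e |: F)| <= #|F| + 3.
  rewrite VofU.
  have -> : inc e :|: Vof F = (inc e :\: Vof F) :|: Vof F.
    by apply/setP=> x; rewrite !inE; case: (x \in Vof F); rewrite ?orbT ?orbF ?andbT.
  by apply: leq_trans (leq_card_setU _ _) _; lia.
split.
- by apply/set0Pn; exists e; rewrite !inE eqxx.
- move=> S SV SF par; rewrite cF' in SF par.
  have [w [we wSV wU wfull]] : exists w, [/\ w \in inc e, (w \in S) || (w \in Vof F),
      (forall c, c \in S -> c \in inc e :\: Vof F -> c = w) &
      ((#|S| == #|F|.+1) ==> (w \in S))].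
    have [exA|noA] := boolP [exists c, (c \in S) && (c \in inc e :\: Vof F)].
      case/existsP: exA => c /andP[cS cP]; exists c; split.
      + by move: cP; rewrite inE => /andP[].
      + by rewrite cS.
      + by move=> c' c'S c'P; apply: privU.
      + by rewrite cS implybT.
    move/existsPn: noA => noA.
    have noA' c : c \in S -> c \in inc e :\: Vof F -> c = c.
      by [].
    case: (boolP (#|S| == #|F|.+1)) => [/eqP full|nfull].
      have [w /andP[wS we]] : exists w, (w \in S) && (w \in inc e).
        case: (pickP (fun w => (w \in S) && (w \in inc e))) => [w hw|noB]; first by exists w.
        exfalso.
        have SD : S \subset Vof (e |: F) :\: inc e.
          apply/subsetP=> x xS; rewrite inE (subsetP SV x xS) andbT.
          by move: (noB x) => /=; rewrite xS /= => ->.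
        have ie : inc e \subset Vof (e |: F) by rewrite VofU subsetUl.
        move: (subset_leq_card SD) (cardsID (inc e) (Vof (e |: F))).
        rewrite (setIidPr ie) H3; lia.
      exists w; split=> //; first by rewrite wS.
        by move=> c cS cP; move: (noA c); rewrite cS cP.
    have [w /andP[we wf]] : exists w, (w \in inc e) && (w \in inc f).
      have : 0 < #|inc e :&: inc f| by rewrite cef.
      by case/card_gt0P=> w; rewrite inE => ww; exists w.
    exists w; split=> //.
    + by rewrite (subsetP sub_f w wf) orbT.
    + by move=> c cS cP; move: (noA c); rewrite cS cP.
  pose S' := [set v | (v \in S) != (v == w)].
  have [cS1 cS2] := card_flip S w; rewrite -/S' in cS1 cS2.
  have S'V : S' \subset Vof F.
    apply/subsetP=> v; rewrite inE.
    case: (eqVneq v w) => [->|vw] /=.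
      move=> wS; move: wSV; case: (w \in S) wS => //=.
    move=> vS; have {}vS : v \in S by move: vS; case: (v \in S).
    move: (subsetP SV v vS); rewrite VofU inE; case/orP=> // ve.
    case: (boolP (v \in Vof F)) => // vF.
    by move: vw; rewrite (wU v vS) ?eqxx // inE vF ve.
  have [o' [o'in o'S]] : exists o' : E -> V, (forall e, e \in F -> o' e \in inc e) /\
      (forall v, odd #|[set e in F | o' e == v]| = (v \in S')).
    apply: QF => //.
      case: (boolP (w \in S)) => wS.
        by move: (cS1 wS) SF; lia.
      have hne : #|S| != #|F|.
        by apply/eqP => eqSF; move: par; rewrite eqSF addnS /= addnn odd_double.
      move: wfull; rewrite (negbTE wS) implybF => hne2.
      by move: (cS2 wS) SF hne hne2; lia.
    case: (boolP (w \in S)) => wS.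
      by move: par; rewrite -(cS1 wS) addSn addnS /= negbK.
    by rewrite (cS2 wS) addSn; rewrite addnS in par.
  exists (fun x => if x == e then w else o' x); split.
    move=> x; rewrite inE; case: (eqVneq x e) => [->|xe] //= xF.
    by apply: o'in; move: xF; rewrite inE (negbTE xe).
  move=> v.
  pose X := [set x in F | o' x == v].
  have eX : e \notin X by rewrite inE (negbTE eF).
  have -> : [set x in e |: F | (if x == e then w else o' x) == v] =
            if w == v then e |: X else X.
    apply/setP=> x; rewrite !inE; case: (eqVneq x e) => [->|xe] /=.
      by case: (w == v); rewrite ?inE ?eqxx // (negbTE eF).
    by case: (w == v); rewrite ?inE ?(negbTE xe).
  have oX := o'S v.
  rewrite -/X in oX.
  case: (eqVneq w v) => [wv|wv].
    subst v; rewrite cardsU1 eX /= oX inE eqxx.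
    by case: (w \in S).
  by rewrite oX inE [v == w]eq_sym (negbTE wv); case: (v \in S).
- by rewrite cardsU1 (negbTE eF) add1n; lia.
Qed.

End Par.

Section Even.
Variables (V E : finType) (inc : E -> {set V}).
Hypothesis H3 : three_uniform inc.
Hypothesis HL : L2_connected inc.

Lemma L2adj_sym e f : L2adj inc e f = L2adj inc f e.
Proof. by rewrite /L2adj eq_sym setIC. Qed.

Lemma crossing (F : {set E}) : F != set0 -> F != setT ->
  exists e f, [/\ e \notin F, f \in F & L2adj inc e f].
Proof.
move=> /set0Pn [f0 f0F] /negP FT.
case: (boolP [exists e, exists f, (e \notin F) && (f \in F) && L2adj inc e f]).
  case/existsP=> e /existsP [f /andP[/andP[eF fF] ef]]; by exists e, f.
move/existsPn=> no; exfalso; apply: FT; rewrite eqEsubset subsetT /=.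
apply/subsetP=> x _.
have cl : closed (L2adj inc) (mem F).
  move=> a b ab /=.
  case: (boolP (a \in F)) => aF; case: (boolP (b \in F)) => bF //.
  - by move: (no b); move/existsPn/(_ a); rewrite bF aF L2adj_sym ab.
  - by move: (no a); move/existsPn/(_ b); rewrite aF bF ab.
by rewrite -(closed_connect cl (HL f0 x)).
Qed.

Lemma AllGood : 0 < #|E| -> Good inc setT.
Proof.
move=> E0.
have step : forall k, 0 < k <= #|E| -> exists F : {set E}, #|F| = k /\ Good inc F.
  elim=> [//|k IH] /andP[_ kE].
  case: k IH kE => [_ _|k IH kE].
    move: E0; rewrite -cardsT => /card_gt0P [e0 _]; exists [set e0]; split; first exact: cards1.
    exact: Good1.
  have [F [cF GF]] : exists F : {set E}, #|F| = k.+1 /\ Good inc F.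
    by apply: IH; lia.
  have [F0 _ _] := GF.
  have FT : F != setT.
    apply/eqP=> FT; move: kE; rewrite -cF FT cardsT; lia.
  have [e [f [eF fF ef]]] := crossing F0 FT.
  exists (e |: F); split; first by rewrite cardsU1 eF cF.
  by apply: (Grow H3 GF eF fF); move: ef => /andP[_ /eqP].
have [F [cF GF]] : exists F : {set E}, #|F| = #|E| /\ Good inc F by apply: step; rewrite E0 leqnn.
suff -> : setT = F by [].
apply/esym/eqP; rewrite eqEcard subsetT cardsT cF leqnn //.
Qed.


Lemma sum_deg : \sum_v hdeg inc v = #|E| * 3.
Proof.
rewrite /hdeg double_count (eq_bigr (fun _ => 3)); last by move=> e _; rewrite H3.
by rewrite sum_nat_const cardT.
Qed.

Lemma even_pairing : 0 < #|E| -> no_pendant inc ->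
  exists P : E -> {set V}, (forall e, P e \subset inc e /\ #|P e| = 2) /\
    (forall v, ~~ odd #|[set e | v \in P e]|).
Proof.
move=> E0 NP.
have [_ Q _] := AllGood E0.
pose S := [set v | odd (hdeg inc v)].
have SV : S \subset Vof inc setT.
  apply/subsetP=> v; rewrite inE => od.
  have : 0 < hdeg inc v by case: (hdeg inc v) od.
  rewrite /hdeg => /card_gt0P [e]; rewrite inE => ve.
  by apply/bigcupP; exists e; rewrite ?inE.
have S3 : #|S| * 3 <= #|E| * 3.
  rewrite -sum_deg.
  apply: leq_trans (_ : \sum_v (if v \in S then 3 else 0) <= _).
    by rewrite -big_mkcond sum_nat_const.
  apply: leq_sum => v _; rewrite inE; case: (boolP (odd (hdeg inc v))) => // od.
  move: (NP v) od; case: (hdeg inc v) => [|[|[|]]] //.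
have par : ~~ odd (#|S| + #|setT : {set E}|).
  rewrite cardsT oddD -odd_sum_card sum_deg oddM /=.
  by case: (odd #|E|).
have SF : #|S| <= #|setT : {set E}| by rewrite cardsT; lia.
have [o [oin oS]] := Q S SV SF par.
exists (fun e => inc e :\ o e); split.
  move=> e; split; first exact: subsetDl.
  have oe : o e \in inc e by apply: oin; rewrite inE.
  by move: (cardsD1 (o e) (inc e)); rewrite oe H3 => -[].
move=> v.
have oin' e : o e \in inc e by apply: oin; rewrite inE.
have hd : hdeg inc v = #|[set e | v \in inc e :\ o e]| + #|[set e | o e == v]|.
  rewrite /hdeg -cardsUI.
  have -> : [set e | v \in inc e :\ o e] :&: [set e | o e == v] = set0.
    by apply/setP=> e; rewrite !inE; case: (eqVneq (o e) v); rewrite ?andbF.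
  rewrite cards0 addn0; apply: eq_card => e; rewrite !inE.
  case: (eqVneq (o e) v) => [oev|ov] /=; first by rewrite -oev oin'.
  by case: (v \in inc e).
have := oS v; rewrite inE.
have -> : [set e in setT | o e == v] = [set e | o e == v] by apply/setP=> e; rewrite !inE.
rewrite hd oddD; case: (odd #|[set e | o e == v]|); case: (odd _) => //.
Qed.

End Even.

Section Trail.
Variables (V E : finType) (inc : E -> {set V}).

Definition valid (P : E -> {set V}) := forall e, P e \subset inc e /\ #|P e| = 2.
Definition evenP (P : E -> {set V}) := forall v, ~~ odd #|[set e | v \in P e]|.

Fixpoint ptrail (P : E -> {set V}) (v : V) (s : seq (E * V)) : bool :=
  match s with
  | [::] => true
  | (e, w) :: s' => [&& v != w, v \in P e, w \in P e & ptrail P w s']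
  end.

Lemma ptrail_cat P v s1 s2 :
  ptrail P v (s1 ++ s2) = ptrail P v s1 && ptrail P (last v (map snd s1)) s2.
Proof.
elim: s1 v => [//|[e w] s1 IH] v /=.
by rewrite IH !andbA.
Qed.

Lemma ptrail_walk P v s : valid P -> ptrail P v s -> is_walk inc v s.
Proof.
move=> vP; elim: s v => [//|[e w] s IH] v /= /and4P[vw ve we tr].
have [sub _] := vP e.
by rewrite vw (subsetP sub v ve) (subsetP sub w we) IH.
Qed.

Lemma ptrail_ext P P' v s : (forall f, f \in map fst s -> P' f = P f) ->
  ptrail P' v s = ptrail P v s.
Proof.
elim: s v => [//|[e w] s IH] v /= h.
by rewrite h ?inE ?eqxx // IH // => f fs; apply: h; rewrite inE fs orbT.
Qed.

Lemma mem2_nat (a b x : V) : a != b ->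
  (x \in [set a; b] : nat) = (x == a) + (x == b).
Proof.
move=> ab; rewrite !inE; case: (eqVneq x a) => [->|]; last by [].
by rewrite (negbTE ab).
Qed.

Lemma ptrail_count P v s x : valid P -> ptrail P v s ->
  odd (count (fun p => x \in P p.1) s) = (x == v) (+) (x == last v (map snd s)).
Proof.
move=> vP; elim: s v => [|[e w] s IH] v /=; first by rewrite addbb.
move=> /and4P[vw ve we tr].
have [_ c2] := vP e.
rewrite (card2_eq c2 ve we vw) oddD (IH w tr) mem2_nat //.
rewrite oddD !oddb.
by case: (x == v); case: (x == w); case: (x == last w [seq i.2 | i <- s]).
Qed.

Lemma count_uniq_all (A : {set E}) (l : seq E) :
  uniq l -> A \subset [set x | x \in l] -> count (mem A) l = #|A|.
Proof.
move=> ul Al; rewrite -size_filter -(card_uniqP (filter_uniq _ ul)).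
apply: eq_card => x; rewrite mem_filter.
change (mem A x) with (x \in A).
case: (boolP (x \in A)) => // xA.
by move: (subsetP Al x xA); rewrite inE => ->.
Qed.

Lemma rot_closed P v s1 s2 : ptrail P v (s1 ++ s2) -> last v (map snd (s1 ++ s2)) = v ->
  ptrail P (last v (map snd s1)) (s2 ++ s1) /\
  last (last v (map snd s1)) (map snd (s2 ++ s1)) = last v (map snd s1).
Proof.
rewrite ptrail_cat map_cat last_cat => /andP[t1 t2] lst.
by rewrite ptrail_cat t2 lst t1 map_cat last_cat lst.
Qed.

Lemma uniq_size (s : seq (E * V)) : uniq (map fst s) -> size s <= #|E|.
Proof. by move=> u; rewrite -(size_map fst) -(card_uniqP u) max_card. Qed.

End Trail.

Lemma swap_card (V E : finType) (P P' : E -> {set V}) e g : e != g ->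
  (forall f, f != e -> f != g -> P' f = P f) ->
  forall z, (z \in P' e : nat) + (z \in P' g) = (z \in P e : nat) + (z \in P g) ->
  #|[set f | z \in P' f]| = #|[set f | z \in P f]|.
Proof.
move=> eg h z hz; rewrite !cnt.
rewrite (bigD1 e) //= [in RHS](bigD1 e) //=.
rewrite (bigD1 g) /=; last by rewrite eq_sym.
rewrite [in RHS](bigD1 g) /=; last by rewrite eq_sym.
rewrite (eq_bigr (fun f => (z \in P f) : nat)); last first.
  by move=> f /andP[fg fe]; rewrite h.
rewrite !addnA hz; lia.
Qed.

Section Ext.
Variables (V E : finType) (inc : E -> {set V}).
Hypothesis H3 : three_uniform inc.
Hypothesis HL : L2_connected inc.

Lemma uniq_rcons_fst (X : seq (E * V)) p :
  uniq (map fst (rcons X p)) = (p.1 \notin map fst X) && uniq (map fst X).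
Proof. by rewrite map_rcons rcons_uniq. Qed.

Lemma ext_open P v s : valid inc P -> evenP P -> ptrail P v s -> uniq (map fst s) ->
  last v (map snd s) != v ->
  exists s', [/\ ptrail P v s', uniq (map fst s') & size s' = (size s).+1].
Proof.
move=> vP eP tr us lv.
set w := last v (map snd s) in lv.
have cnt_odd : odd (count (fun p => w \in P p.1) s).
  by rewrite (ptrail_count w vP tr) -/w (negbTE lv) eqxx.
have [f /andP[wf fs]] : exists f, (w \in P f) && (f \notin map fst s).
  case: (pickP (fun f => (w \in P f) && (f \notin map fst s))) => [f hf|no].
    by exists f.
  exfalso; move: cnt_odd.
  have -> : count (fun p => w \in P p.1) s = count (mem [set e | w \in P e]) (map fst s).
    by rewrite count_map; apply: eq_count => p; rewrite /= inE.
  rewrite count_uniq_all //; first by rewrite (negbTE (eP w)).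
  apply/subsetP=> e; rewrite !inE => we.
  by move: (no e) => /=; rewrite we /=; case: (e \in map fst s).
have [y /andP[yP yw]] := card2_other (proj2 (vP f)) wf.
exists (rcons s (f, y)); split.
- by rewrite -cats1 ptrail_cat tr /= -/w eq_sym yw wf yP.
- by rewrite uniq_rcons_fst fs us.
- by rewrite size_rcons.
Qed.

Lemma ext_at P v s1 s2 g : valid inc P -> ptrail P v (s1 ++ s2) ->
  last v (map snd (s1 ++ s2)) = v -> uniq (map fst (s1 ++ s2)) ->
  g \notin map fst (s1 ++ s2) -> last v (map snd s1) \in P g ->
  exists v' s', [/\ ptrail P v' s', uniq (map fst s') & size s' = (size (s1 ++ s2)).+1].
Proof.
move=> vP tr cl us gs ug.
set u := last v (map snd s1) in ug.
have [tr' cl'] := rot_closed tr cl.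
have pe : perm_eq (map fst (s2 ++ s1)) (map fst (s1 ++ s2)).
  by rewrite !map_cat perm_catC.
have [y /andP[yP yu]] := card2_other (proj2 (vP g)) ug.
exists u, (rcons (s2 ++ s1) (g, y)); split.
- by rewrite -cats1 ptrail_cat tr' cl' /= eq_sym yu ug yP.
- by rewrite uniq_rcons_fst (perm_mem pe) gs (perm_uniq pe) us.
- by rewrite size_rcons !size_cat addnC.
Qed.


Lemma ext_switch P v X e w g : valid inc P -> evenP P ->
  ptrail P v (rcons X (e, w)) -> last v (map snd (rcons X (e, w))) = v ->
  uniq (map fst (rcons X (e, w))) -> g \notin map fst (rcons X (e, w)) ->
  #|inc e :&: inc g| = 2 -> (forall z, z \in P e -> z \in P g -> False) ->
  exists P' v' s', [/\ valid inc P', evenP P', ptrail P' v' s', uniq (map fst s')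
                     & size s' = (size X).+2].
Proof.
move=> vP eP tr cl us gs cI dis.
rewrite map_rcons last_rcons /= in cl; subst w.
move: tr; rewrite -cats1 ptrail_cat /= => /andP[trX /and4P[uv uPe vPe _]].
set u := last v (map snd X) in uv uPe.
move: us; rewrite uniq_rcons_fst /= => /andP[eX uX].
move: gs; rewrite map_rcons mem_rcons inE negb_or => /andP[ge gX].
have [sube ce] := vP e; have [subg cg] := vP g.
have [x /andP[xPe xI]] : exists x, (x \in P e) && (x \in inc e :&: inc g).
  by apply: (inter_nonempty sube (subsetIl _ _)); rewrite H3 ce cI.
have [y /andP[yPg yI]] : exists y, (y \in P g) && (y \in inc e :&: inc g).
  by apply: (inter_nonempty subg (subsetIr _ _)); rewrite H3 cg cI.
have xy : x != y by apply/eqP=> exy; apply: (dis x) => //; rewrite exy.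
have I2 := card2_eq cI xI yI xy.
have [d /andP[dPg dy]] := card2_other cg yPg.
have dNe : d \notin inc e.
  apply/negP=> de.
  have : d \in inc e :&: inc g by rewrite inE de (subsetP subg d dPg).
  rewrite I2 !inE => /orP[] /eqP dxy.
    by apply: (dis x) => //; rewrite -dxy.
  by move: dy; rewrite dxy eqxx.
have Pg2 : P g = [set y; d] by apply: card2_eq => //; rewrite eq_sym.
have xd : x != d by apply/eqP=> xd; move: dNe; rewrite -xd; move: xI; rewrite inE => /andP[->].
have yie : y \in inc e by move: yI; rewrite inE => /andP[].
have yig : y \in inc g by move: yI; rewrite inE => /andP[].
have xig : x \in inc g by move: xI; rewrite inE => /andP[].
have dig : d \in inc g by apply: (subsetP subg).
have gen : forall c, c \in P e -> c != x ->
   exists P' : E -> {set V}, [/\ valid inc P', evenP P', P' e = [set y; c],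
     P' g = [set x; d] & forall f, f != e -> f != g -> P' f = P f].
  move=> c cPe cx.
  have Pe2 : P e = [set x; c] by apply: card2_eq => //; rewrite eq_sym.
  have cNg : c \notin inc g.
    apply/negP=> cg'.
    have : c \in inc e :&: inc g by rewrite inE cg' (subsetP sube c cPe).
    rewrite I2 !inE => /orP[] /eqP cxy.
      by move: cx; rewrite cxy eqxx.
    by apply: (dis y) => //; rewrite -cxy.
  have yc : y != c by apply/eqP=> yc; move: cNg; rewrite -yc yig.
  have cie : c \in inc e by apply: (subsetP sube).
  exists (fun f => if f == e then [set y; c] else if f == g then [set x; d] else P f).
  split.
  - move=> f; case: (eqVneq f e) => [->|fe]; last case: (eqVneq f g) => [->|fg].
    + split; last by rewrite cards2 yc.
      by apply/subsetP=> z; rewrite !inE => /orP[] /eqP->.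
    + split; last by rewrite cards2 xd.
      by apply/subsetP=> z; rewrite !inE => /orP[] /eqP->.
    + exact: vP.
  - move=> z; rewrite (@swap_card _ _ P _ e g) ?(eP z) //.
    + by rewrite eq_sym.
    + by move=> f fe fg; rewrite (negbTE fe) (negbTE fg).
    rewrite eqxx (negbTE ge) eqxx Pe2 Pg2 (mem2_nat _ yc) (mem2_nat _ xd).
    rewrite (mem2_nat _ (_ : x != c)) ?(mem2_nat _ (_ : y != d)); try by rewrite eq_sym.
    by case: (z == x); case: (z == y); case: (z == c); case: (z == d).
  - by rewrite eqxx.
  - by rewrite (negbTE ge) eqxx.
  - by move=> f fe fg; rewrite (negbTE fe) (negbTE fg).
have Xext : forall P' : E -> {set V}, (forall f, f != e -> f != g -> P' f = P f) ->
    ptrail P' v X = ptrail P v X.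
  move=> P' h; apply: ptrail_ext => f fX; apply: h.
    by apply/eqP=> fe; move: eX; rewrite -fe fX.
  by apply/eqP=> fg; move: gX; rewrite -fg fX.
have uni : uniq (map fst ((e, v) :: rcons X (g, d))) &&
           uniq (map fst ((g, v) :: rcons X (e, y))).
  rewrite /= !map_rcons !mem_rcons !rcons_uniq !inE.
  rewrite /= (negbTE eX) (negbTE gX) uX !orbF ge; by rewrite eq_sym ge.
case/andP: uni => uni1 uni2.
have [xu|xv] := card2_cases ce uPe vPe uv xPe.
-
  have vx : v != x by rewrite xu eq_sym.
  have [P' [vP' eP' P'e P'g P'o]] := gen v vPe vx.
  have yv : y != v by apply/eqP=> yv; apply: (dis y) => //; rewrite yv.
  exists P', y, ((e, v) :: rcons X (g, d)); split=> //.
  + rewrite /= P'e !inE yv !eqxx !orbT /=.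
    rewrite -cats1 ptrail_cat Xext // trX /= -/u -xu P'g !inE !eqxx !orbT xd /=.
    done.
  + by rewrite /= size_rcons.
-
  have ux : u != x by rewrite xv.
  have [P' [vP' eP' P'e P'g P'o]] := gen u uPe ux.
  have uy : u != y by apply/eqP=> uy; apply: (dis y) => //; rewrite -uy.
  exists P', d, ((g, v) :: rcons X (e, y)); split=> //.
  + rewrite /= P'g !inE -xv !eqxx !orbT (eq_sym d x) xd /=.
    rewrite xv -cats1 ptrail_cat Xext // trX /= -/u P'e !inE !eqxx !orbT uy /=.
    done.
  + by rewrite /= size_rcons.
Qed.


Lemma ext_closed P v s : valid inc P -> evenP P -> ptrail P v s -> uniq (map fst s) ->
  last v (map snd s) = v -> (exists g0, g0 \notin map fst s) ->
  exists P' v' s', [/\ valid inc P', evenP P', ptrail P' v' s', uniq (map fst s')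
                     & size s' = (size s).+1].
Proof.
move=> vP eP tr us cl [g0 g0s].
have [s0|sn] := eqVneq s [::].
  subst s.
  have [u uP] : exists u, u \in P g0.
    have : 0 < #|P g0| by rewrite (proj2 (vP g0)).
    by case/card_gt0P=> u uP; exists u.
  have [y /andP[yP yu]] := card2_other (proj2 (vP g0)) uP.
  by exists P, u, [:: (g0, y)]; split=> //=; rewrite eq_sym yu uP yP.
have [p ps] : exists p, p \in s.
  by move: sn; case: s {tr us cl g0s} => [//|p s0] _; exists p; rewrite inE eqxx.
pose F := [set e | e \in map fst s].
have F0 : F != set0.
  by apply/set0Pn; exists p.1; rewrite inE; apply: map_f.
have FT : F != setT.
  apply/eqP=> FT; move: g0s.
  have : g0 \in F by rewrite FT inE.
  by rewrite inE => ->.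
have [g [e [gF eF ge]]] := crossing HL F0 FT.
move: gF eF; rewrite !inE => gs es.
have ceg : #|inc e :&: inc g| = 2 by move: ge; rewrite L2adj_sym => /andP[_ /eqP].
case/mapP: es => [[e' w] ew /= ee]; subst e'.
case/splitPr: ew tr us cl gs => s1 s2 tr us cl gs.
set u := last v (map snd s1).
move: (tr); rewrite ptrail_cat /= -/u => /andP[_ /and4P[uw uPe wPe _]].
case: (boolP [exists z, (z \in P e) && (z \in P g)]).
  case/existsP=> z /andP[zPe zPg].
  have [zu|zw] := card2_cases (proj2 (vP e)) uPe wPe uw zPe.
    have ug : last v (map snd s1) \in P g by rewrite -/u -zu.
    have [v' [s' [tr' us' sz']]] := ext_at vP tr cl us gs ug.
    by exists P, v', s'.
  rewrite -cat_rcons in tr us cl gs *.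
  have lw : last v (map snd (rcons s1 (e, w))) = w by rewrite map_rcons last_rcons.
  have ug : last v (map snd (rcons s1 (e, w))) \in P g by rewrite lw -zw.
  have [v' [s' [tr' us' sz']]] := ext_at vP tr cl us gs ug.
  by exists P, v', s'.
move/existsPn=> nz.
have dis z : z \in P e -> z \in P g -> False.
  by move=> a b; move: (nz z); rewrite a b.
rewrite -cat_rcons in tr us cl gs *.
have lw : last v (map snd (rcons s1 (e, w))) = w by rewrite map_rcons last_rcons.
have [tr' cl'] := rot_closed tr cl.
rewrite lw -rcons_cat in tr' cl'.
have pe : perm_eq (map fst (rcons (s2 ++ s1) (e, w))) (map fst (rcons s1 (e, w) ++ s2)).
  by rewrite rcons_cat !map_cat perm_catC.
have us' : uniq (map fst (rcons (s2 ++ s1) (e, w))) by rewrite (perm_uniq pe).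
have gs' : g \notin map fst (rcons (s2 ++ s1) (e, w)) by rewrite (perm_mem pe).
have [P' [v' [s' [vP' eP' tr'' us'' sz]]]] :=
  ext_switch vP eP tr' cl' us' gs' ceg dis.
exists P', v', s'; split=> //.
by rewrite sz !size_cat size_rcons addSn addnC.
Qed.

End Ext.

Lemma arith_step a b : b < a -> a - b.+1 < a - b.
Proof. lia. Qed.

Theorem corollary2p37 (V E : finType) (inc : E -> {set V}) :
  0 < #|E| ->
  three_uniform inc ->
  no_pendant inc ->
  L2_connected inc ->
  eulerian inc.
Proof.
move=> E0 H3 NP HL.
have [P [vP eP]] := even_pairing H3 HL E0 NP.
have [e0 _] : exists e0 : E, true.
  by move: E0; rewrite -cardsT => /card_gt0P [e0 _]; exists e0.
have [v0 _] : exists v0 : V, v0 \in inc e0.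
  have : 0 < #|inc e0| by rewrite H3.
  by case/card_gt0P=> v0 h; exists v0.
suff main : forall n (P : E -> {set V}) v s, valid inc P -> evenP P -> ptrail P v s ->
    uniq (map fst s) -> #|E| - size s = n -> eulerian inc.
  exact: (main _ P v0 [::] vP eP isT isT erefl).
elim/ltn_ind => n IH P' v s vP' eP' tr us hn.
case: (eqVneq (last v (map snd s)) v) => [cl|ncl]; last first.
  have [s' [tr' us' sz]] := ext_open vP' eP' tr us ncl.
  apply: (IH (#|E| - size s') _ P' v s') => //.
  rewrite -hn sz; apply: arith_step.
  by move: (uniq_size us'); rewrite sz.
case: (boolP (all (fun e => e \in map fst s) (enum E))) => [allin|nall].
  exists v, s; rewrite /euler_tour /closed_walk /strict_trail.
  rewrite (ptrail_walk vP' tr) us cl eqxx allin /= andbT.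
  have e0s : e0 \in map fst s by move/allP: allin; apply; rewrite mem_enum.
  case: s tr us cl allin e0s {hn} => [//|[e w] [|p s']] //= /and4P[vw _ _ _] _ cl.
  by move: vw; rewrite cl eqxx.
have [g0 g0s] : exists g0, g0 \notin map fst s.
  by move/allPn: nall => [g0 _ g0s]; exists g0.
have [P'' [v' [s' [vP'' eP'' tr' us' sz]]]] :=
  ext_closed H3 HL vP' eP' tr us cl (ex_intro _ g0 g0s).
apply: (IH (#|E| - size s') _ P'' v' s') => //.
rewrite -hn sz; apply: arith_step.
by move: (uniq_size us'); rewrite sz.
Qed.
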